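(* Let $D=(N,A)$, $\mathcal{K}$, $\{D^k\}_{k\in\mathcal{K}}$ be an instance of SND-RR with time horizon $T$, $\mathcal{A}$ a valid arc partition, $G=G(D,\mathcal{A})=(V,E)$ the auxiliary flat network, and $G_S=(V_S,E_S\cup F_S)$ a partial network of $G$ satisfying properties (P1$'$) and (P2$'$) below. Then the optimal value of SND-RR$(G_S)$ is a lower bound on the optimal value of SND-RR$(G_T)$. (P1$'$) For all $k\in\mathcal{K}$, $(o'_k,r_k)\in V_S$ and $(d^0_k,l_k)\in V_S$; for all $v\in N$, $(v^0,T)\in V_S$ and $(u,0)\in V_S$ for all $u\in\mathcal{V}(v)$. (P2$'$) For all $xz\in E$ and all $(x,t)\in V_S$ with $t+\tau_{xz}\le T$, we have $((x,t),(z,t'))\in E_S$ where $t'=\max\{r: r\le t+\tau_{xz},\ (z,r)\in V_S\}$.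
   Context: An instance of SND-RR consists of: a directed graph $D=(N,A)$; for each $vw\in A$ a transit time $\tau_{vw}\in\mathbb{Z}_{>0}$, fixed cost $f_{vw}>0$, capacity $u_{vw}\in\mathbb{Z}_{>0}$, per-unit cost $c^k_{vw}>0$ for each commodity $k$; commodities $\mathcal{K}$, each with origin $o_k$, destination $d_k$, demand $q_k$, release time $r_k$, deadline $l_k$ (integers, earliest release $0$); subgraphs $D^k=(N^k,A^k)\subseteq D$ with $\delta^+_{D^k}(d_k)=\emptyset$ and $\delta^+_{D^k}(v)\ne\emptyset$ for $v\in N^k\setminus\{d_k\}$. $T=\max_kl_k$, $[T]=\{0,\dots,T\}$. For a timed arc $a=((v,t),(w,t'))$ with underlying arc $vw$: $u_a=u_{vw}$, $f_a=f_{vw}$, $c^k_a=c^k_{vw}$, $\tau_a=\tau_{vw}$ (not $t'-t$). $x^k(S)=\sum_{a\in S}x^k_a$; $\delta^\pm_H(v,t)$ are outgoing/incoming timed arcs in $H$. Valid partition: $\mathcal{A}=\{\mathcal{A}_v\}_{v\in N}$, each $\mathcal{A}_v$ a partition of $\delta^+_D(v)$, such that for each $k$, $\delta^+_{D^k}(v)\subseteq A_i$ for some $A_i\in\mathcal{A}_v$. Auxiliary network $G=(V,E)$: $\mathcal{V}(v)=\{v^0,\dots,v^{|\mathcal{A}_v|}\}$ (copy $v^i$ per part $A_i\in\mathcal{A}_v$, terminal copy $v^0$), $V=\bigcup_v\mathcal{V}(v)$, $E=\{v^iw^j:vw\in A_i\in\mathcal{A}_v,w^j\in\mathcal{V}(w)\}$,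 each $v^iw^j$ with the transit time and costs of $vw$. With $\mathcal{K}(A_i)=\{k:\emptyset\ne\delta^+_{D^k}(v)\subseteq A_i\}$: $G^k=(V^k,E^k)$, $V^k=\{v^i:v\in N^k,A_i\in\mathcal{A}_v,k\in\mathcal{K}(A_i)\}\cup\{d^0_k\}$, $E^k=\{v^iw^j:vw\in A^k,v^i,w^j\in V^k\}$; $o'_k$ is the unique copy of $o_k$ in $V^k$. Full time-expanded network of $G$: $G_T=(V_T,E_T\cup F_T)$ with $V_T=V\times[T]$, movement arcs $((x,t),(z,t+\tau_{xz}))$ for $xz\in E$, $t+\tau_{xz}\le T$, holdover arcs $((x,t),(x,t+1))$; similarly $G^k_T=(V^k_T,E^k_T\cup F^k_T)$, and $D_T=(N_T,A_T\cup H_T)$ for $D$. For $a=((v,t),(w,t'))\in A_T$, $\mathcal{E}_T(a)=\{((v^i,t),(w^j,t')):vw\in A_i\in\mathcal{A}_v,w^j\in\mathcal{V}(w)\}$. SND-RR$(G_T)$: minimize $\sum_{a\in A_T}f_ay_a+\sum_k\sum_{e\in E_T}c^k_eq_kx^k_e$ s.t. for all $k$, $(x,t)\in V^k_T$: $x^k(\delta^+_{G^k_T}(x,t))-x^k(\delta^-_{G^k_T}(x,t))$ is $1$ at $(o'_k,r_k)$, $-1$ at $(d^0_k,l_k)$, $0$ otherwise; $\sum_k\sum_{e\in\mathcal{E}_T(a)}q_kx^k_e\le u_ay_a$ for $a\in A_T$; $x^k_e\in\{0,1\}$ for $e\in E^k_T\cup F^k_T$ ($0$ otherwise); $y_a\in\mathbb{Z}_{\ge0}$.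 A partial network of $G$ is $G_S=(V_S,E_S\cup F_S)$ with $V_S\subseteq V_T$, $E_S\subseteq\{((x,t),(z,t')):(x,t)\in V_T,xz\in E,t'\le t+\tau_{xz}\le T\}$, and $F_S$ the holdover arcs joining each $(x,t)\in V_S$ to the next copy of $x$ in $V_S$. $G^k_S=(V^k_S,E^k_S\cup F^k_S)$: $V^k_S=\{(x,t)\in V_S:x\in V^k\}$, $E^k_S=\{((x,t),(z,t'))\in E_S:xz\in E^k\}$, $F^k_S$ the arcs of $F_S$ on copies of nodes of $V^k$. The associated partial network of $D$ is $D_S(G_S)=(N_S,A_S\cup H_S)$ with $N_S=\{(v,t):(u,t)\in V_S\text{ for some }u\in\mathcal{V}(v)\}$ and $A_S=\{((v,t),(w,t')):(v,t)\in N_S,vw\in A,t+\tau_{vw}\le T,t'=\max\{r:r\le t+\tau_{vw},(w,r)\in N_S\}\}$. For $a=((v,t),(w,t'))\in A_S$, $\mathcal{E}_S(a)=\{((v^i,t),(w^j,t''))\in E_S: w^j\in\mathcal{V}(w), vw\in A_i\in\mathcal{A}_v\}$. SND-RR$(G_S)$: minimize $\sum_{a\in A_S}f_ay_a+\sum_k\sum_{e\in E_S}c^k_eq_kx^k_e$ s.t. for all $k$, $(x,t)\in V^k_S$: $x^k(\delta^+_{G^k_S}(x,t))-x^k(\delta^-_{G^k_S}(x,t))$ is $1$ at $(o'_k,r_k)$, $-1$ at $(d^0_k,l_k)$, $0$ otherwise; $\sum_k\sum_{e\in\mathcal{E}_S(a)}q_kx^k_e\le u_ay_a$ for all $a\in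 A_S$; $\sum_{e\in E^k_S}\tau_ex^k_e\le l_k-r_k$ for all $k$; $x^k_e\in\{0,1\}$ for $e\in E^k_S\cup F^k_S$ ($0$ otherwise); $y_a\in\mathbb{Z}_{\ge0}$ for $a\in A_S$. *)

(* Defs.v *)
From HB Require Import structures.
From mathcomp Require Import all_boot all_order all_algebra.
Set Implicit Arguments. Unset Strict Implicit. Unset Printing Implicit Defensive.
Import Order.TTheory GRing.Theory Num.Theory.

Local Open Scope ring_scope.

(* An SND-RR instance: digraph D = (N, A) (A given as a relation on N),
   commodities K, per-commodity subgraphs D^k = (N^k, A^k). *)
Record instance (R : realFieldType) := Instance {
  node : finType;
  comm : finType;
  arc : rel node;
  tau : node -> node -> nat;
  fc : node -> node -> R;
  cap : node -> node -> nat;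
  uc : comm -> node -> node -> R;
  orig : comm -> node;
  dest : comm -> node;
  dem : comm -> nat;
  rel_t : comm -> nat;
  dl : comm -> nat;
  knode : comm -> pred node;
  karc : comm -> rel node
}.

Arguments node {R} i.
Arguments comm {R} i.
Arguments arc {R} i.
Arguments tau {R} i.
Arguments fc {R} i.
Arguments cap {R} i.
Arguments uc {R} i.
Arguments orig {R} i.
Arguments dest {R} i.
Arguments dem {R} i.
Arguments rel_t {R} i.
Arguments dl {R} i.
Arguments knode {R} i.
Arguments karc {R} i.

Section SND.
Variable R : realFieldType.
Variable I : instance R.

Local Notation N := (node I).
Local Notation K := (comm I).

Definition wf_instance : Prop :=
  [/\ (forall v w, arc I v w ->
         [/\ (0 < tau I v w)%N, 0 < fc I v w, (0 < cap I v w)%N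
           & forall k, 0 < uc I k v w]),
      (exists k, rel_t I k = 0%N),
      (forall k v w, karc I k v w ->
         [/\ arc I v w, knode I k v & knode I k w]),
      (forall k, knode I k (orig I k) /\ knode I k (dest I k))
    & (forall k w, ~~ karc I k (dest I k) w)
    ] /\ (forall k v, knode I k v -> v != dest I k ->
         exists w, karc I k v w).

Definition Tmax : nat := (\max_(k : K) dl I k)%N.

Local Notation T := Tmax.

(* Outgoing arc sets identified with their sets of heads *)
Definition outD (v : N) : {set N} := [set w | arc I v w].
Definition outDk (k : K) (v : N) : {set N} := [set w | karc I k v w].

Variable part : N -> {set {set N}}.

Definition valid_partition : Prop :=
  forall v, partition (part v) (outD v) /\
    forall k, outDk k v != set0 ->
      exists2 P, P \in part v & outDk k v \subset P.

(* Nodes of G: (v, None) = v^0, (v, Some P) = the copy v^i for part P = A_i *)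
Definition aux := (N * option {set N})%type.

Definition inV (x : aux) : bool :=
  if x.2 is Some P then P \in part x.1 else true.

Definition inKpart (k : K) (v : N) (P : {set N}) : bool :=
  (outDk k v != set0) && (outDk k v \subset P).

Definition inE (x z : aux) : bool :=
  inV x && inV z &&
  (if x.2 is Some P then arc I x.1 z.1 && (z.1 \in P) else false).

Definition inVk (k : K) (x : aux) : bool :=
  (x == (dest I k, None)) ||
  (knode I k x.1 &&
   (if x.2 is Some P then (P \in part x.1) && inKpart k x.1 P else false)).

Definition inEk (k : K) (x z : aux) : bool :=
  karc I k x.1 z.1 && inVk k x && inVk k z.

(* o'_k: the (unique) copy of o_k in V^k *)
Definition oprime (k : K) : aux :=
  odflt (orig I k, None) [pick x : aux | inVk k x && (x.1 == orig I k)].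

Definition tnode := (aux * 'I_T.+1)%type.
Definition tarc := (tnode * tnode)%type.
Definition dnode := (N * 'I_T.+1)%type.
Definition darc := (dnode * dnode)%type.

Definition is_src (k : K) (n : tnode) : bool :=
  (n.1 == oprime k) && (val n.2 == rel_t I k).
Definition is_snk (k : K) (n : tnode) : bool :=
  (n.1 == (dest I k, None)) && (val n.2 == dl I k).

(* flow conservation of (binary) flows xm (movement arcs) and xh
   (holdover arcs) at every node of a network with node set Vn *)
Definition conservation (Vn : pred tnode) (xm xh : tarc -> bool)
    (src snk : pred tnode) : Prop :=
  forall n, Vn n ->
    ((\sum_(e : tarc | e.1 == n) (xm e : nat)
       + \sum_(e : tarc | e.1 == n) (xh e : nat))%N%:Z
     - (\sum_(e : tarc | e.2 == n) (xm e : nat)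
       + \sum_(e : tarc | e.2 == n) (xh e : nat))%N%:Z
     = (src n : nat)%:Z - (snk n : nat)%:Z)%R.

Definition isMoveT (e : tarc) : bool :=
  let: ((x, t), (z, t')) := e in inE x z && ((val t + tau I x.1 z.1)%N == val t').

Definition isMoveTk (k : K) (e : tarc) : bool :=
  let: ((x, t), (z, t')) := e in inEk k x z && ((val t + tau I x.1 z.1)%N == val t').

Definition isHoldTk (k : K) (e : tarc) : bool :=
  let: ((x, t), (z, t')) := e in inVk k x && (z == x) && ((val t).+1 == val t').

Definition isAT (a : darc) : bool :=
  let: ((v, t), (w, t')) := a in arc I v w && ((val t + tau I v w)%N == val t').

Definition inET (a : darc) (e : tarc) : bool :=
  let: ((v, t), (w, t')) := a in
  let: ((x, s), (z, s')) := e in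
  (x.1 == v) && (s == t) && (z.1 == w) && (s' == t') && inV z &&
  (if x.2 is Some P then (P \in part v) && (w \in P) else false).

Definition feasT (xm xh : K -> tarc -> bool) (y : darc -> nat) : Prop :=
  [/\ (forall k e, xm k e -> isMoveTk k e),
      (forall k e, xh k e -> isHoldTk k e),
      (forall k, conservation (fun n => inVk k n.1) (xm k) (xh k)
                   (is_src k) (is_snk k))
    & (forall a : darc, isAT a ->
         (\sum_(k : K) \sum_(e : tarc | inET a e) dem I k * xm k e
           <= cap I a.1.1 a.2.1 * y a)%N) ].

Definition costT (xm : K -> tarc -> bool) (y : darc -> nat) : R :=
  \sum_(a : darc | isAT a) fc I a.1.1 a.2.1 * (y a)%:R
  + \sum_(k : K) \sum_(e : tarc | isMoveT e)
        uc I k e.1.1.1 e.2.1.1 * (dem I k)%:R * (xm k e : nat)%:R.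

Definition partial_network (VS : pred tnode) (ES : pred tarc) : Prop :=
  (forall n, VS n -> inV n.1) /\
  (forall e : tarc, ES e ->
     let: ((x, t), (z, t')) := e in
     [&& VS (x, t), VS (z, t'), inE x z,
         (val t' <= val t + tau I x.1 z.1)%N & (val t + tau I x.1 z.1 <= T)%N]).

Definition isHoldS (VS : pred tnode) (e : tarc) : bool :=
  let: ((x, t), (z, t')) := e in
  [&& VS (x, t), z == x, VS (x, t'), (val t < val t')%N &
      [forall r : 'I_T.+1, ((val t < val r)%N && (val r < val t')%N) ==> ~~ VS (x, r)]].

Definition isEkS (ES : pred tarc) (k : K) (e : tarc) : bool :=
  ES e && inEk k e.1.1 e.2.1.

Definition isFkS (VS : pred tnode) (k : K) (e : tarc) : bool :=
  isHoldS VS e && inVk k e.1.1.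

Definition inNS (VS : pred tnode) (n : dnode) : bool :=
  [exists u : aux, (u.1 == n.1) && inV u && VS (u, n.2)].

Definition isAS (VS : pred tnode) (a : darc) : bool :=
  let: ((v, t), (w, t')) := a in
  [&& inNS VS (v, t), arc I v w, (val t + tau I v w <= T)%N,
      inNS VS (w, t'), (val t' <= val t + tau I v w)%N &
      [forall r : 'I_T.+1,
         ((val t' < val r)%N && (val r <= val t + tau I v w)%N) ==> ~~ inNS VS (w, r)]].

Definition inESa (ES : pred tarc) (a : darc) (e : tarc) : bool :=
  let: ((v, t), (w, t')) := a in
  let: ((x, s), (z, s')) := e in
  [&& ES e, x.1 == v, s == t, z.1 == w, inV z &
      (if x.2 is Some P then (P \in part v) && (w \in P) else false)].

Definition feasS (VS : pred tnode) (ES : pred tarc)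
    (xm xh : K -> tarc -> bool) (y : darc -> nat) : Prop :=
  [/\ (forall k e, xm k e -> isEkS ES k e),
      (forall k e, xh k e -> isFkS VS k e),
      (forall k, conservation (fun n => VS n && inVk k n.1) (xm k) (xh k)
                   (is_src k) (is_snk k)),
      (forall a : darc, isAS VS a ->
         (\sum_(k : K) \sum_(e : tarc | inESa ES a e) dem I k * xm k e
           <= cap I a.1.1 a.2.1 * y a)%N)
    & (forall k, (\sum_(e : tarc | isEkS ES k e)
                    tau I e.1.1.1 e.2.1.1 * xm k e + rel_t I k <= dl I k)%N) ].

Definition costS (VS : pred tnode) (ES : pred tarc)
    (xm : K -> tarc -> bool) (y : darc -> nat) : R :=
  \sum_(a : darc | isAS VS a) fc I a.1.1 a.2.1 * (y a)%:R
  + \sum_(k : K) \sum_(e : tarc | ES e)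
        uc I k e.1.1.1 e.2.1.1 * (dem I k)%:R * (xm k e : nat)%:R.

Definition P1 (VS : pred tnode) : Prop :=
  [/\ (forall k, exists2 t : 'I_T.+1, val t = rel_t I k & VS (oprime k, t)),
      (forall k, exists2 t : 'I_T.+1, val t = dl I k & VS ((dest I k, None), t)),
      (forall v : N, VS ((v, None), ord_max))
    & (forall u : aux, inV u -> VS (u, ord0)) ].

Definition P2 (VS : pred tnode) (ES : pred tarc) : Prop :=
  forall (x z : aux) (t : 'I_T.+1), inE x z -> VS (x, t) ->
    (val t + tau I x.1 z.1 <= T)%N ->
    forall t' : 'I_T.+1,
      (val t' <= val t + tau I x.1 z.1)%N -> VS (z, t') ->
      (forall r : 'I_T.+1,
         (val t' < val r)%N -> (val r <= val t + tau I x.1 z.1)%N -> ~~ VS (z, r)) ->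
      ES ((x, t), (z, t')).

End SND.

(* Main.v *)
Require Import Defs.
From HB Require Import structures.
From mathcomp Require Import all_boot all_order all_algebra.
From mathcomp Require Import zify.
Import Order.TTheory GRing.Theory Num.Theory.
Set Implicit Arguments. Unset Strict Implicit. Unset Printing Implicit Defensive.

Section Aux.
Variable R : realFieldType.
Variable I : instance R.
Variable part : node I -> {set {set node I}}.
Variable VS : pred (tnode I).
Local Notation T := (Tmax I).

Definition phi (x : aux I) (b : nat) : nat :=
  \max_(r : 'I_T.+1 | (val r <= b) && VS (x, r)) val r.
Definition phiO x b : 'I_T.+1 := inord (phi x b).

Lemma phi_leT x b : phi x b <= T.
Proof. rewrite /phi; by apply/bigmax_leqP => i _; rewrite -ltnS ltn_ord. Qed.

Lemma phiOE x b : val (phiO x b) = phi x b.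
Proof. by rewrite /phiO /= inordK // ltnS phi_leT. Qed.

Lemma phi_max x b (r : 'I_T.+1) : val r <= b -> VS (x, r) -> val r <= phi x b.
Proof.
move=> h1 h2; rewrite /phi.
apply: (@leq_bigmax_cond _ (fun r : 'I_T.+1 => (val r <= b) && VS (x, r)) (fun r => val r) r).
by rewrite h1.
Qed.

Lemma phi_spec x b : VS (x, ord0) -> VS (x, phiO x b) /\ phi x b <= b.
Proof.
move=> h0.
have : (0 < #|[pred r : 'I_T.+1 | (val r <= b) && VS (x, r)]|)%N.
  by apply/card_gt0P; exists ord0; rewrite inE /= h0.
move/(eq_bigmax_cond (fun r : 'I_T.+1 => val r)) => [i0 Hi E].
rewrite inE /= in Hi; case/andP: Hi => Hb Hv.
have E' : phi x b = val i0 by rewrite /phi -E; apply: eq_bigl => r; rewrite inE.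
have -> : phiO x b = i0 by apply: val_inj; rewrite phiOE E'.
by rewrite E'.
Qed.

Lemma phi_le x b : phi x b <= b.
Proof. rewrite /phi; by apply/bigmax_leqP => i /andP[]. Qed.

Lemma phi_mono x b1 b2 : b1 <= b2 -> phi x b1 <= phi x b2.
Proof.
move=> h; rewrite {1}/phi; apply/bigmax_leqP => i /andP[h1 h2].
by apply: phi_max => //; apply: leq_trans h.
Qed.

Lemma phiO_id x (t : 'I_T.+1) : VS (x, t) -> phiO x t = t.
Proof.
move=> h; apply: val_inj; rewrite phiOE; apply/eqP; rewrite eqn_leq phi_le.
exact: phi_max.
Qed.

End Aux.

Fixpoint arcsOf (V : Type) (a : V) (p : seq V) : seq (V * V) :=
  if p is b :: p' then (a, b) :: arcsOf b p' else [::].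

Lemma arcs_mem (V : eqType) (a : V) p e :
  e \in arcsOf a p -> (e.1 \in a :: p) && (e.2 \in p).
Proof.
elim: p a => [|b p IH] a //=; rewrite inE => /orP[/eqP -> | /IH /andP[h1 h2]].
  by rewrite !inE !eqxx.
by rewrite h1 orbT in_cons h2 orbT.
Qed.

Lemma arcs_uniq (V : eqType) (a : V) p : uniq (a :: p) -> uniq (arcsOf a p).
Proof.
elim: p a => [|b p IH] a //= /andP[ha hu]; rewrite IH // andbT.
apply/negP => /arcs_mem /andP[h _]; by rewrite /= h in ha.
Qed.

Lemma arcs_path (V : eqType) (r : rel V) (a : V) p e :
  path r a p -> e \in arcsOf a p -> r e.1 e.2.
Proof.
elim: p a => [|b p IH] a //= /andP[hab hp]; rewrite inE => /orP[/eqP -> // | ].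
exact: IH.
Qed.

Lemma arcs_out (V : eqType) (a : V) p n : uniq (a :: p) ->
  (\sum_(e <- arcsOf a p) (e.1 == n) <= 1)%N.
Proof.
elim: p a => [|b p IH] a; first by rewrite big_nil.
move=> /= /andP[ha hu]; rewrite big_cons /=.
case: eqP => [<- | _]; last exact: IH.
rewrite big1_seq // => e /andP[_ /arcs_mem /andP[h _]].
by case: eqP h => // -> h; rewrite h in ha.
Qed.

Lemma arcs_cons (V : eqType) (a : V) p n :
  ((\sum_(e <- arcsOf a p) (e.1 == n))%N%:Z - (\sum_(e <- arcsOf a p) (e.2 == n))%N%:Z
   = (n == a)%:Z - (n == last a p)%:Z)%R.
Proof.
elim: p a => [|b p IH] a; first by rewrite !big_nil /= !subrr.
rewrite /= !big_cons /= !PoszD.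
have -> : forall u v w z : int, ((u + v) - (w + z) = (u - w) + (v - z))%R.
  by move=> u v w z; rewrite opprD addrACA.
rewrite IH /= [a == n]eq_sym [b == n]eq_sym.
by rewrite addrA subrK.
Qed.

Lemma sum_uniq_ind (V : finType) (A : seq V) (P : pred V) :
  uniq A -> \sum_(e | P e) (e \in A : nat) = \sum_(e <- A) (P e : nat).
Proof.
move=> uA; rewrite big_uniq //= [RHS]big_mkcond [LHS]big_mkcond /=.
by apply: eq_bigr => e _; case: (P e); case: (e \in A).
Qed.

Lemma sum_inj_nat (A B : finType) (X : pred A) (Y : pred B) (h : A -> B) (F : B -> nat) :
  {in X &, injective h} -> (forall a, X a -> Y (h a)) ->
  (\sum_(a | X a) F (h a) <= \sum_(b | Y b) F b)%N.
Proof.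
move=> inj hY.
have E := @big_imset nat 0%N addn A B h X F inj.
rewrite (eq_bigl (fun a => a \in X)) // -E.
rewrite [X in (_ <= X)%N](bigID (mem (h @: X))) /=.
apply: leq_trans (leq_addr _ _).
rewrite [X in (_ <= X)%N](eq_bigl (mem (h @: X))) // => b /=.
case hb: (b \in h @: X); last by rewrite andbF.
by case/imsetP: hb => a ha ->; rewrite hY.
Qed.

Lemma sum_inj_R (RR : realFieldType) (A B : finType) (X : pred A) (Y : pred B) (h : A -> B) (F : B -> RR) :
  {in X &, injective h} -> (forall a, X a -> Y (h a)) -> (forall b, Y b -> 0 <= F b)%R ->
  (\sum_(a | X a) F (h a) <= \sum_(b | Y b) F b)%R.
Proof.
move=> inj hY hF.
have E := @big_imset RR 0%R +%R A B h X F inj.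
rewrite (eq_bigl (fun a => a \in X)) // -E.
rewrite [X in (_ <= X)%R](bigID (mem (h @: X))) /=.
rewrite [X in (_ <= X + _)%R](eq_bigl (mem (h @: X))); last first.
  move=> b /=; case hb: (b \in h @: X); last by rewrite andbF.
  by case/imsetP: hb => a ha ->; rewrite hY.
rewrite lerDl; apply: sumr_ge0 => b /andP[hb _]; exact: hF.
Qed.

Section Main.
Variable R : realFieldType.
Variable I : instance R.
Variable part : node I -> {set {set node I}}.
Variables (VS : pred (tnode I)) (ES : pred (tarc I)).
Hypothesis wf : wf_instance I.
Hypothesis vp : valid_partition part.
Hypothesis pn : partial_network part VS ES.
Hypothesis p1 : P1 part VS.
Hypothesis p2 : P2 part VS ES.
Variables (xm xh : comm I -> tarc I -> bool) (y : darc I -> nat).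
Hypothesis fT : feasT part xm xh y.
Local Notation T := (Tmax I).

Lemma inVk_inV k x : inVk part k x -> inV part x.
Proof.
case: x => v [P|] //; rewrite /inVk /inV /= => /orP[/eqP[] //|/andP[_ /andP[-> _]]] //.
Qed.

Lemma VS0 x : inV part x -> VS (x, ord0).
Proof. by case: p1 => _ _ _ h; apply: h. Qed.

Lemma inEk_inE k x z : inEk part k x z -> Defs.inE part x z.
Proof.
case: wf => [[h1 h2 h3 h4 h5] h6].
case/andP => /andP[hk hx] hz.
rewrite /Defs.inE (inVk_inV hx) (inVk_inV hz) /=.
move: hx; rewrite /inVk; case/orP => [/eqP E | ].
  by move: hk; rewrite E /= (negbTE (h5 _ _)).
case: x hk => v [P|] hk /andP[_] //=.
rewrite /inKpart => /andP[hP /andP[_ hsub]].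
case: (h3 _ _ _ hk) => -> _ _ /=.
by apply: (subsetP hsub); rewrite inE.
Qed.

Definition imgn (n : tnode I) : tnode I := (n.1, phiO VS n.1 n.2).
Definition img (e : tarc I) : tarc I :=
  ((e.1.1, phiO VS e.1.1 e.1.2),
   (e.2.1, phiO VS e.2.1 (phi VS e.1.1 e.1.2 + tau I e.1.1.1 e.2.1.1))).

Definition lab k (e : tarc I) : bool :=
  isEkS part ES k e && [exists e', xm k e' && (img e' == e)].

Definition Ek k : rel (tnode I) := fun n n' => lab k (n, n') || isFkS part VS k (n, n').

Lemma hold_chain k x (s1 s2 : 'I_T.+1) : inVk part k x -> VS (x, s1) -> VS (x, s2) ->
  (s1 <= s2)%N -> connect (Ek k) (x, s1) (x, s2).
Proof.
move=> hx.
suff H : forall m (s1 : 'I_T.+1), (s2 - s1 < m)%N -> VS (x, s1) -> VS (x, s2) ->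
  (s1 <= s2)%N -> connect (Ek k) (x, s1) (x, s2) by apply: H.
elim=> [|m IH] {}s1 //.
move=> hm h1 h2; rewrite leq_eqVlt => /orP[/eqP E | lt12].
  by have -> : s1 = s2 by apply: val_inj.
case: (@arg_minnP _ s2 (fun r : 'I_T.+1 => (s1 < r)%N && VS (x, r)) val); first by rewrite lt12 h2.
move=> s' /andP[l1 v'] hmin.
have ls2 : (s' <= s2)%N by apply: hmin; rewrite lt12 h2.
apply: (@connect_trans _ _ (x, s')); last first.
  by apply: IH => //; lia.
apply: connect1; rewrite /Ek; apply/orP; right.
rewrite /isFkS /isHoldS /= hx andbT h1 eqxx v' l1 /=.
apply/forallP => r; apply/implyP => /andP[a b]; apply/negP => vr.
by have := hmin r; rewrite a vr /= => /(_ isT); rewrite leqNgt b.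
Qed.

Lemma img_edge k e : xm k e || xh k e -> connect (Ek k) (imgn e.1) (imgn e.2).
Proof.
case: fT => hm hh _ _.
case/orP => [he | he].
- have := hm _ _ he; case: e he => [[x t] [z t']] he /= /andP[hE /eqP ht].
  have iE := inEk_inE hE.
  have vx : inV part x by case/andP: iE => /andP[].
  have vz : inV part z by case/andP: iE => /andP[].
  have [sx lx] := phi_spec (phiO VS x t) (VS0 vx).
  have [sz lz] := phi_spec (phi VS x t + tau I x.1 z.1) (VS0 vz).
  apply: (@connect_trans _ _ (img ((x, t), (z, t'))).2).
    apply: connect1; rewrite /Ek /imgn /=; apply/orP; left.
    rewrite /lab /isEkS /= hE andbT; apply/andP; split; last first.
      by apply/existsP; exists ((x, t), (z, t')); rewrite he eqxx.
    have [s0 lx0] := phi_spec t (VS0 vx).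
    apply: p2 => //.
    + by rewrite phiOE; apply: leq_trans (_ : (t + tau I x.1 z.1 <= T)%N); [rewrite leq_add2r phi_le | rewrite ht -ltnS ltn_ord].
    + by rewrite !phiOE.
    + move=> r; rewrite !phiOE => a b; apply/negP => vr.
      by have := phi_max b vr; rewrite leqNgt a.
  rewrite /img /=.
  apply: hold_chain => //; first by case/andP: hE.
  + by have [] := phi_spec t' (VS0 vz).
  + rewrite !phiOE; apply: phi_mono; rewrite -ht leq_add2r; exact: phi_le.
- have := hh _ _ he; case: e he => [[x t] [z t']] he /= /andP[/andP[hx /eqP ->] /eqP ht].
  have vx := inVk_inV hx.
  rewrite /imgn /=; apply: hold_chain => //.
  + by have [] := phi_spec t (VS0 vx).
  + by have [] := phi_spec t' (VS0 vx).
  + by rewrite !phiOE; apply: phi_mono; rewrite -ht.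
Qed.


Definition w k (e : tarc I) : nat := (xm k e + xh k e)%N.

Lemma w_ends k e : (0 < w k e)%N -> inVk part k e.1.1 && inVk part k e.2.1.
Proof.
case: fT => hm hh _ _; rewrite /w.
case hx: (xm k e); case hy: (xh k e) => //= _.
- by move/hm: hx; clear hy; case: e => [[x t] [z t']]; rewrite /isMoveTk /inEk /= => /andP[/andP[/andP[_ ->] ->] _].
- by move/hm: hx; clear hy; case: e => [[x t] [z t']]; rewrite /isMoveTk /inEk /= => /andP[/andP[/andP[_ ->] ->] _].
- by move/hh: hy; clear hx; case: e => [[x t] [z t']]; rewrite /isHoldTk /= => /andP[/andP[h /eqP ->] _]; rewrite h.
Qed.

Lemma cons_nat k n : inVk part k n.1 ->
  (\sum_(e | e.1 == n) w k e + is_snk k n = \sum_(e | e.2 == n) w k e + is_src part k n)%N.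
Proof.
case: fT => _ _ hc _ hn; have := hc k n hn.
rewrite /w !big_split /=.
have key : forall a b c d : nat, (a%:Z - b%:Z = c%:Z - d%:Z)%R -> (a + d = b + c)%N.
  by move=> a b c d H; lia.
exact: key.
Qed.

Lemma sum_out (S : pred (tnode I)) (F : tarc I -> nat) :
  \sum_(n | S n) \sum_(e | e.1 == n) F e = \sum_(e | S e.1) F e.
Proof.
symmetry; rewrite (partition_big (fun e : tarc I => e.1) S) //.
apply: eq_bigr => n Sn; apply: eq_bigl => e; by case: eqP => [->|]; rewrite ?Sn ?andbF.
Qed.

Lemma sum_in (S : pred (tnode I)) (F : tarc I -> nat) :
  \sum_(n | S n) \sum_(e | e.2 == n) F e = \sum_(e | S e.2) F e.
Proof.
symmetry; rewrite (partition_big (fun e : tarc I => e.2) S) //.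
apply: eq_bigr => n Sn; apply: eq_bigl => e; by case: eqP => [->|]; rewrite ?Sn ?andbF.
Qed.

Lemma cons_sum k (S : pred (tnode I)) : (forall n, S n -> inVk part k n.1) ->
  (\sum_(e | S e.1) w k e + \sum_(n | S n) is_snk k n =
   \sum_(e | S e.2) w k e + \sum_(n | S n) is_src part k n)%N.
Proof.
move=> hS; rewrite -sum_out -sum_in -!big_split /=.
by apply: eq_bigr => n /hS; apply: cons_nat.
Qed.

Lemma cut k (S : pred (tnode I)) : (forall n, S n -> inVk part k n.1) ->
  (forall e, (0 < w k e)%N -> S e.1 -> S e.2) ->
  (\sum_(n | S n) is_src part k n <= \sum_(n | S n) is_snk k n)%N.
Proof.
move=> hS hcl; have E := cons_sum hS.
have : (\sum_(e | S e.1) w k e <= \sum_(e | S e.2) w k e)%N.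
  rewrite [X in (X <= _)%N]big_mkcond [X in (_ <= X)%N]big_mkcond /=.
  apply: leq_sum => e _; case h1: (S e.1) => //.
  case hw: (0 < w k e)%N; last by move: hw; rewrite lt0n => /negbFE/eqP ->.
  by rewrite (hcl _ hw h1).
lia.
Qed.

Lemma cut2 k (S : pred (tnode I)) : (forall n, S n -> inVk part k n.1) ->
  (forall e, (0 < w k e)%N -> S e.2 -> S e.1) ->
  (\sum_(n | S n) is_snk k n <= \sum_(n | S n) is_src part k n)%N.
Proof.
move=> hS hcl; have E := cons_sum hS.
have : (\sum_(e | S e.2) w k e <= \sum_(e | S e.1) w k e)%N.
  rewrite [X in (X <= _)%N]big_mkcond [X in (_ <= X)%N]big_mkcond /=.
  apply: leq_sum => e _; case h1: (S e.2) => //.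
  case hw: (0 < w k e)%N; last by move: hw; rewrite lt0n => /negbFE/eqP ->.
  by rewrite (hcl _ hw h1).
lia.
Qed.

Lemma dl_le k : (dl I k <= T)%N.
Proof. rewrite /Tmax; exact: (@leq_bigmax_cond _ xpredT (fun k => dl I k) k). Qed.

Definition snkT k : tnode I := ((dest I k, None), inord (dl I k)).

Lemma is_snkE k n : is_snk k n = (n == snkT k).
Proof.
case: n => x t; rewrite /is_snk /snkT /= xpair_eqE; congr (_ && _).
by rewrite -val_eqE /= inordK // ltnS dl_le.
Qed.

Lemma snkT_in k : inVk part k (snkT k).1.
Proof. by rewrite /inVk eqxx. Qed.

Lemma sum_pred1 (S : pred (tnode I)) a : S a -> (\sum_(n | S n) (n == a) = 1)%N.
Proof.
move=> Sa; rewrite (bigD1 a) //= eqxx big1 // => n /andP[_ /negbTE ->] //.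
Qed.

Lemma sum_snk k : (\sum_(n | inVk part k n.1) is_snk k n = 1)%N.
Proof.
rewrite (eq_bigr (fun n => (n == snkT k : nat))) ?sum_pred1 ?snkT_in // => n _.
by rewrite is_snkE.
Qed.

Lemma src_ex k : exists n, inVk part k n.1 && is_src part k n.
Proof.
have := @cut2 k (fun n => inVk part k n.1) (fun n h => h).
rewrite sum_snk => /(_ _)/Wrap[].
  by move=> e /w_ends /andP[].
case: (pickP (fun n => inVk part k n.1 && is_src part k n)) => [n hn | none].
  by exists n.
rewrite big1 // => n hn; by move: (none n); rewrite hn /=; case: (is_src part k n).
Qed.

Lemma rel_le k : (rel_t I k <= T)%N.
Proof.
case: (src_ex k) => [[x t]] /andP[_ /andP[_ /eqP <-]]; by rewrite -ltnS ltn_ord.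
Qed.

Definition srcT k : tnode I := (oprime part k, inord (rel_t I k)).

Lemma is_srcE k n : is_src part k n = (n == srcT k).
Proof.
case: n => x t; rewrite /is_src /srcT /= xpair_eqE; congr (_ && _).
by rewrite -val_eqE /= inordK // ltnS rel_le.
Qed.

Lemma srcT_in k : inVk part k (srcT k).1.
Proof.
case: (src_ex k) => n /andP[h]; rewrite is_srcE => /eqP <-; exact: h.
Qed.

Lemma sum_src k : (\sum_(n | inVk part k n.1) is_src part k n = 1)%N.
Proof.
rewrite (eq_bigr (fun n => (n == srcT k : nat))) ?sum_pred1 ?srcT_in // => n _.
by rewrite is_srcE.
Qed.

Lemma VS_src k : VS (srcT k).
Proof.
case: p1 => h _ _ _; case: (h k) => t ht hv.
have -> : srcT k = (oprime part k, t) by rewrite /srcT; congr pair; apply: val_inj => /=; rewrite inordK; [exact: esym ht | by rewrite ltnS rel_le].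
exact: hv.
Qed.

Lemma VS_snk k : VS (snkT k).
Proof.
case: p1 => _ h _ _; case: (h k) => t ht hv.
have -> : snkT k = ((dest I k, None), t) by rewrite /snkT; congr pair; apply: val_inj => /=; rewrite inordK; [exact: esym ht | by rewrite ltnS dl_le].
exact: hv.
Qed.

Lemma imgn_id n : VS n -> imgn n = n.
Proof. by case: n => x t h; rewrite /imgn /= phiO_id. Qed.

Lemma reach k : connect (Ek k) (srcT k) (snkT k).
Proof.
pose S := fun n : tnode I => inVk part k n.1 && connect (Ek k) (srcT k) (imgn n).
have := @cut k S (fun n h => proj1 (andP h)).
move=> /(_ _)/Wrap[].
  move=> e hw /andP[h1 h2]; rewrite /S (proj2 (andP (w_ends hw))) /=.
  apply: connect_trans h2 _; apply: img_edge.
  by move: hw; rewrite /w; case: (xm k e); case: (xh k e).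
have -> : (\sum_(n | S n) is_src part k n = 1)%N.
  rewrite (eq_bigr (fun n => (n == srcT k : nat))) ?sum_pred1 // => [|n _]; last by rewrite is_srcE.
  by rewrite /S srcT_in imgn_id ?VS_src ?connect0.
case: (pickP (fun n => S n && is_snk k n)) => [n /andP[Sn] | none].
  by rewrite is_snkE => /eqP E; move: Sn; rewrite /S E imgn_id ?VS_snk // => /andP[].
rewrite big1 // => n hn; by move: (none n); rewrite hn /=; case: (is_snk k n).
Qed.

Lemma exP k : exists p, [&& path (Ek k) (srcT k) p, last (srcT k) p == snkT k & uniq (srcT k :: p)].
Proof.
case/connectP: (reach k) => p hp ->.
case: {hp}(shortenP hp) => p' hp' hu _; exists p'; by rewrite hp' hu eqxx.
Qed.

Definition pk k := xchoose (exP k).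

Lemma pkP k : [&& path (Ek k) (srcT k) (pk k), last (srcT k) (pk k) == snkT k & uniq (srcT k :: pk k)].
Proof. exact: (xchooseP (exP k)). Qed.


Definition tauE (e : tarc I) : nat := tau I e.1.1.1 e.2.1.1.

Lemma tele k : (\sum_e (xm k e * tauE e + xh k e) + rel_t I k = dl I k)%N.
Proof.
case: fT => hm hh _ _.
pose tm := fun n : tnode I => val n.2.
have A : forall e, ((xm k e * tauE e + xh k e) + w k e * tm e.1 = w k e * tm e.2)%N.
  move=> e; rewrite /w /tm.
  have H1 : xm k e -> (val e.2.2 = val e.1.2 + tauE e)%N.
    by move/hm; case: e => [[x t] [z t']] /= /andP[_ /eqP ->].
  have H2 : xh k e -> (val e.2.2 = (val e.1.2).+1)%N.
    by clear H1; move/hh; case: e => [[x t] [z t']] /= /andP[_ /eqP ->].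
  case: (xm k e) H1; case: (xh k e) H2 => /= H2 H1.
  - have := H1 isT; have := H2 isT; lia.
  - have := H1 isT; lia.
  - have := H2 isT; lia.
  - lia.
have S1 : forall (F : tarc I -> tnode I) (sel : tarc I -> tnode I), (forall e, (0 < w k e)%N -> inVk part k (sel e).1) ->
   (\sum_e w k e * tm (sel e) = \sum_(n | inVk part k n.1) tm n * \sum_(e | sel e == n) w k e)%N.
  move=> _ sel hsel.
  rewrite [LHS](bigID (fun e => inVk part k (sel e).1)) /= [X in (_ + X)%N]big1 ?addn0; last first.
    move=> e /negP h; case hw: (0 < w k e)%N; first by case: h; apply: hsel.
    by move: hw; rewrite lt0n => /negbFE/eqP ->.
  rewrite (partition_big sel (fun n => inVk part k n.1)) //=.
  apply: eq_bigr => n hn; rewrite big_distrr /=; apply: eq_big => e.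
    by case: eqP => [->|]; rewrite ?hn ?andbF.
  by move=> /andP[_ /eqP ->]; rewrite mulnC.
have Sout := S1 (fun e => e.1) (fun e => e.1) (fun e h => proj1 (andP (w_ends h))).
have Sin := S1 (fun e => e.1) (fun e => e.2) (fun e h => proj2 (andP (w_ends h))).
have Ssum : (\sum_e (xm k e * tauE e + xh k e) + \sum_e w k e * tm e.1 = \sum_e w k e * tm e.2)%N.
  by rewrite -big_split /=; apply: eq_bigr => e _; apply: A.
have C : (\sum_(n | inVk part k n.1) tm n * ((\sum_(e | e.1 == n) w k e) + is_snk k n) =
          \sum_(n | inVk part k n.1) tm n * ((\sum_(e | e.2 == n) w k e) + is_src part k n))%N.
  by apply: eq_bigr => n hn; rewrite cons_nat.
have Esnk : (\sum_(n | inVk part k n.1) tm n * is_snk k n = dl I k)%N.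
  rewrite -[RHS]muln1 -(sum_snk k) big_distrr /=; apply: eq_bigr => n _.
  rewrite is_snkE; case: eqP => [-> | _]; last by rewrite !muln0.
  by rewrite /tm /snkT /= inordK // ltnS dl_le.
have Esrc : (\sum_(n | inVk part k n.1) tm n * is_src part k n = rel_t I k)%N.
  rewrite -[RHS]muln1 -(sum_src k) big_distrr /=; apply: eq_bigr => n _.
  rewrite is_srcE; case: eqP => [-> | _]; last by rewrite !muln0.
  by rewrite /tm /srcT /= inordK // ltnS rel_le.
rewrite !(eq_bigr _ (fun n _ => mulnDr _ _ _)) !big_split /= Esnk Esrc -Sout -Sin in C.
have key : forall X a b d r : nat, (X + a = b -> a + d = b + r -> X + r = d)%N by move=> *; lia.
exact: key Ssum C.
Qed.


Definition arcs k := arcsOf (srcT k) (pk k).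
Definition xm' k e := (e \in arcs k) && lab k e.
Definition xh' k e := (e \in arcs k) && ~~ lab k e.
Definition pre k (e : tarc I) := odflt e [pick e' | xm k e' && (img e' == e)].

Lemma arcs_Ek k e : e \in arcs k -> Ek k e.1 e.2.
Proof. by case/and3P: (pkP k) => hp _ _; apply: arcs_path hp. Qed.

Lemma arcs_u k : uniq (arcs k).
Proof. by case/and3P: (pkP k) => _ _ hu; apply: arcs_uniq. Qed.

Lemma pre_spec k e : lab k e -> xm k (pre k e) && (img (pre k e) == e).
Proof.
case/andP => _ /existsP[e' he']; rewrite /pre.
case: pickP => [e'' h|none] //=; by have := none e'; rewrite he'.
Qed.

Lemma pre_inj k : {in xm' k &, injective (pre k)}.
Proof.
move=> e1 e2; rewrite /in_mem /= => /andP[_ /pre_spec /andP[_ /eqP h1]] /andP[_ /pre_spec /andP[_ /eqP h2]] E.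
by rewrite -h1 -h2 E.
Qed.

Lemma xm'_S k e : xm' k e -> isEkS part ES k e.
Proof. by case/andP => _ /andP[]. Qed.

Lemma xh'_S k e : xh' k e -> isFkS part VS k e.
Proof.
case/andP => /arcs_Ek; case: e => n n' /= /orP[h|h] // /negP; by [].
Qed.

Lemma consS k n :
  ((\sum_(e : tarc I | e.1 == n) (xm' k e : nat) + \sum_(e : tarc I | e.1 == n) (xh' k e : nat))%N%:Z
   - (\sum_(e : tarc I | e.2 == n) (xm' k e : nat) + \sum_(e : tarc I | e.2 == n) (xh' k e : nat))%N%:Z
   = (is_src part k n : nat)%:Z - (is_snk k n : nat)%:Z)%R.
Proof.
have E : forall P : pred (tarc I), (\sum_(e | P e) (xm' k e : nat) + \sum_(e | P e) (xh' k e : nat) =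
   \sum_(e | P e) (e \in arcs k : nat))%N.
  move=> P; rewrite -big_split; apply: eq_bigr => e _; rewrite /xm' /xh'.
  by case: (e \in arcs k); case: (lab k e).
rewrite !E !sum_uniq_ind ?arcs_u // arcs_cons is_srcE is_snkE.
by case/and3P: (pkP k) => _ /eqP -> _.
Qed.

Lemma tauS k : (\sum_(e | isEkS part ES k e) tau I e.1.1.1 e.2.1.1 * xm' k e + rel_t I k <= dl I k)%N.
Proof.
rewrite -(tele k) leq_add2r.
have -> : (\sum_(e | isEkS part ES k e) tau I e.1.1.1 e.2.1.1 * xm' k e = \sum_(e | xm' k e) tauE e)%N.
  rewrite big_mkcond [RHS]big_mkcond /=; apply: eq_bigr => e _.
  case h: (xm' k e); last by rewrite muln0 if_same.
  by rewrite (xm'_S h) muln1.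
have -> : (\sum_(e | xm' k e) tauE e = \sum_(e | xm' k e) tauE (pre k e))%N.
  apply: eq_bigr => e /andP[_ /pre_spec /andP[_ /eqP h]].
  by rewrite -{1}h.
apply: leq_trans (@sum_inj_nat _ _ (xm' k) (xm k) (pre k) tauE (@pre_inj k) _) _.
  by move=> e /andP[_ /pre_spec /andP[]].
rewrite big_mkcond /=; apply: leq_sum => e _.
by case: (xm k e); rewrite ?mul1n ?leq_addr.
Qed.


Definition tailc (a : darc I) : aux I := (a.1.1, Some (pblock (part a.1.1) a.2.1)).
Definition mtch (a a' : darc I) : bool :=
  [&& a.1.1 == a'.1.1, a.2.1 == a'.2.1 & phiO VS (tailc a) a.1.2 == a'.1.2].
Definition y' (a' : darc I) : nat := \sum_(a | isAT a && mtch a a') y a.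
Definition tailS (a' : darc I) : tnode I :=
  ((a'.1.1, Some (pblock (part a'.1.1) a'.2.1)), a'.1.2).

Lemma pblockE v P w : P \in part v -> w \in P -> pblock (part v) w = P.
Proof.
move=> hP hw; case/and3P: (proj1 (vp v)) => _ tI _.
exact: def_pblock.
Qed.

Lemma tailc_x (x z : aux I) : Defs.inE part x z -> (x.1, Some (pblock (part x.1) z.1)) = x.
Proof.
case: x => v [P|]; rewrite /Defs.inE /inV /=; last by rewrite andbF.
by case/andP => /andP[hP _] /andP[_ hw]; rewrite (pblockE hP hw).
Qed.

Lemma inESa_tail a' e : inESa part ES a' e -> e.1 = tailS a'.
Proof.
case: a' => [[v t] [w t']]; case: e => [[x s] [z s']]; rewrite /inESa /tailS /=.
case/andP => _ /andP[/eqP hx /andP[/eqP hs /andP[/eqP hz /andP[_]]]].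
case: x hx => x1 [P|] //= -> /andP[hP hw].
by rewrite hs (pblockE hP hw).
Qed.

Lemma capk k a' : (\sum_(e | inESa part ES a' e) dem I k * xm' k e <=
   \sum_(a | isAT a && mtch a a') \sum_(f | inET part a f) dem I k * xm k f)%N.
Proof.
case: (pickP (fun e => inESa part ES a' e && xm' k e)) => [e /andP[he hx] | none]; last first.
  rewrite big1 // => e he; move: (none e); rewrite he /=; by case: (xm' k e); rewrite ?muln0.
apply: (@leq_trans (dem I k)).
  rewrite -big_distrr /=; rewrite -[X in (_ <= X)%N]muln1 leq_mul2l; apply/orP; right.
  apply: (@leq_trans (\sum_(f | f.1 == tailS a') (f \in arcs k : nat))).
    rewrite [X in (X <= _)%N]big_mkcond [X in (_ <= X)%N]big_mkcond /=.
    apply: leq_sum => f _; case hf: (inESa part ES a' f) => //.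
    by rewrite (inESa_tail hf) eqxx /xm'; case: (lab k f); rewrite ?andbT ?andbF.
  rewrite sum_uniq_ind ?arcs_u //; apply: arcs_out.
  by case/and3P: (pkP k).
have /andP[hxm /eqP himg] := pre_spec (proj2 (andP hx)).
case: fT => hm _ _ _.
have := hm _ _ hxm; move: himg he hxm.
case: (pre k e) => [[x t] [z t']] himg he hxm /andP[hE /eqP ht].
have iE := inEk_inE hE.
have tx := tailc_x iE.
have hv : inV part z by case/andP: iE => /andP[].
move: iE; case: x tx himg he hxm hE ht => x1 [P|] tx himg he hxm hE ht; last by rewrite /Defs.inE andbF.
rewrite /Defs.inE /= => /andP[/andP[hP _] /andP[harc hw]].
have hP2 : P \in part x1 by [].
pose a : darc I := ((x1, t), (z.1, t')).
have hA : isAT a && mtch a a'.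
  rewrite /isAT /= harc ht eqxx /=.
  move: he; rewrite -himg; case: a' => [[v s] [w s']]; rewrite /inESa /mtch /tailc /=.
  case/andP => _ /andP[/eqP <- /andP[/eqP <- /andP[/eqP <- _]]].
  by rewrite !eqxx /= tx.
rewrite (bigD1 a) //=; apply: (leq_trans _ (leq_addr _ _)).
rewrite (bigD1 ((x1, Some P), t, (z, t'))) /=; last first.
  by rewrite /inET /= !eqxx hv hP2 hw.
by rewrite hxm muln1 leq_addr.
Qed.


Lemma capS a' : isAS part VS a' ->
  (\sum_k \sum_(e | inESa part ES a' e) dem I k * xm' k e <= cap I a'.1.1 a'.2.1 * y' a')%N.
Proof.
move=> _.
apply: (@leq_trans (\sum_k \sum_(a | isAT a && mtch a a') \sum_(f | inET part a f) dem I k * xm k f)).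
  by apply: leq_sum => k _; apply: capk.
rewrite exchange_big /= /y' big_distrr /=; apply: leq_sum => a /andP[hA hm].
case: fT => _ _ _ hc; have := hc a hA.
by case/and3P: hm => /eqP -> /eqP -> _.
Qed.

Lemma AS_uniq a1 a2 : isAS part VS a1 -> isAS part VS a2 -> a1.1 = a2.1 -> a1.2.1 = a2.2.1 -> a1 = a2.
Proof.
case: a1 => [[v t] [w t1]]; case: a2 => [[v2 s] [w2 t2]] /= h1 h2 [e1 e2] e3; subst.
have [E|] : t1 = t2 \/ t1 <> t2 by case: (t1 =P t2); [left|right].
  by rewrite E.
move=> ne; exfalso.
move: h1 h2; rewrite /isAS.
move=> /and5P[_ _ _ n1 /andP[l1 f1]] /and5P[_ _ _ n2 /andP[l2 f2]].
case: (ltngtP t1 t2) => [lt|lt|/val_inj //].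
  by move: (forallP f1 t2); rewrite lt l2 /= n2.
by move: (forallP f2 t1); rewrite lt l1 /= n1.
Qed.

Lemma fixed_cost : (\sum_(a' | isAS part VS a') fc I a'.1.1 a'.2.1 * (y' a')%:R <=
    \sum_(a | isAT a) fc I a.1.1 a.2.1 * (y a)%:R)%R.
Proof.
case: wf => [[h1 _ _ _ _] _].
have -> : (\sum_(a' | isAS part VS a') fc I a'.1.1 a'.2.1 * (y' a')%:R =
   \sum_(a' | isAS part VS a') \sum_(a | isAT a && mtch a a') fc I a.1.1 a.2.1 * (y a)%:R)%R.
  apply: eq_bigr => a' _; rewrite /y' natr_sum big_distrr /=; apply: eq_bigr => a /andP[_].
  by case/and3P => /eqP -> /eqP ->.
rewrite (exchange_big_dep (fun a => isAT a)) /=; last by move=> ? ? _ /andP[].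
apply: ler_sum => a hA.
have c0 : (0 <= fc I a.1.1 a.2.1 * (y a)%:R)%R.
  apply: mulr_ge0; last exact: ler0n.
  case: a hA => [[v t] [w t']] /andP[ha _]; by case: (h1 _ _ ha) => _ /ltW.
case: (pickP (fun a' => isAS part VS a' && (isAT a && mtch a a'))) => [a0 h0 | none]; last first.
  by rewrite big1 // => a' h; move: (none a'); rewrite h.
rewrite (bigD1 a0) //= big1 ?addr0 // => a' /andP[h /eqP ne]; exfalso; apply: ne.
case/and3P: h => s1 _ m1; case/and3P: h0 => s0 _ m0.
case/and3P: m1 => /eqP e1 /eqP e2 /eqP e3; case/and3P: m0 => /eqP f1 /eqP f2 /eqP f3.
apply: AS_uniq => //; last by rewrite -e2 -f2.
clear s1 s0 e2 f2.
case: a' e1 e3 => [[? ?] ?] /= <- <-; by case: a0 f1 f3 => [[? ?] ?] /= <- <-.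
Qed.


Lemma var_cost : (\sum_k \sum_(e | ES e) uc I k e.1.1.1 e.2.1.1 * (dem I k)%:R * (xm' k e : nat)%:R <=
   \sum_k \sum_(e | isMoveT part e) uc I k e.1.1.1 e.2.1.1 * (dem I k)%:R * (xm k e : nat)%:R)%R.
Proof.
case: wf => [[h1 _ h3 _ _] _].
case: fT => hm _ _ _.
apply: ler_sum => k _.
pose ck := fun e : tarc I => (uc I k e.1.1.1 e.2.1.1 * (dem I k)%:R)%R.
have -> : (\sum_(e | ES e) uc I k e.1.1.1 e.2.1.1 * (dem I k)%:R * (xm' k e : nat)%:R = \sum_(e | xm' k e) ck e)%R.
  rewrite big_mkcond [RHS]big_mkcond /=; apply: eq_bigr => e _.
  case h: (xm' k e); last by rewrite mulr0 if_same.
  by case/andP: (xm'_S h) => -> _; rewrite mulr1.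
have -> : (\sum_(e | isMoveT part e) uc I k e.1.1.1 e.2.1.1 * (dem I k)%:R * (xm k e : nat)%:R = \sum_(e | xm k e) ck e)%R.
  rewrite big_mkcond [RHS]big_mkcond /=; apply: eq_bigr => e _.
  case h: (xm k e); last by rewrite mulr0 if_same.
  rewrite mulr1; move: (hm _ _ h); case: e {h} => [[x t] [z t']] /= /andP[hE ->].
  by rewrite (inEk_inE hE).
have -> : (\sum_(e | xm' k e) ck e = \sum_(e | xm' k e) ck (pre k e))%R.
  apply: eq_bigr => e /andP[_ /pre_spec /andP[_ /eqP h]].
  by rewrite -{1}h.
apply: (@sum_inj_R _ _ _ (xm' k) (xm k) (pre k) ck (@pre_inj k)).
  by move=> e /andP[_ /pre_spec /andP[]].
move=> e he; rewrite /ck; apply: mulr_ge0; last exact: ler0n.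
move: (hm _ _ he); case: e {he} => [[x t] [z t']] /= /andP[/andP[/andP[hk _] _] _].
by case: (h3 _ _ _ hk) => ha _ _; case: (h1 _ _ ha) => _ _ _ /(_ k) /ltW.
Qed.

Lemma main_ex : exists (xm2 xh2 : comm I -> tarc I -> bool) (y2 : darc I -> nat),
      feasS part VS ES xm2 xh2 y2 /\
      (costS part VS ES xm2 y2 <= costT part xm y)%R.
Proof.
exists xm', xh', y'; split.
  split.
  - by move=> k e /xm'_S.
  - by move=> k e /xh'_S.
  - by move=> k n _; apply: consS.
  - exact: capS.
  - exact: tauS.
rewrite /costS /costT; apply: lerD.
  exact: fixed_cost.
exact: var_cost.
Qed.

End Main.

Local Open Scope ring_scope.

Theorem theorem3 (R : realFieldType) (I : instance R)
    (part : node I -> {set {set node I}})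
    (VS : pred (tnode I)) (ES : pred (tarc I)) :
  wf_instance I ->
  valid_partition part ->
  partial_network part VS ES ->
  P1 part VS ->
  P2 part VS ES ->
  forall (xm xh : comm I -> tarc I -> bool) (y : darc I -> nat),
    feasT part xm xh y ->
    exists (xm' xh' : comm I -> tarc I -> bool) (y' : darc I -> nat),
      feasS part VS ES xm' xh' y' /\
      costS part VS ES xm' y' <= costT part xm y.
Proof.
move=> wf vp pn p1 p2 xm xh y fT.
exact: (main_ex wf vp p1 p2 fT).
Qed.
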